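(* Let $q$ be a prime power and $n\ge4$. Then $$\mathbb{E}_q(n,1)=2^{\left\lfloor\log_2\left(\frac{q^{n-1}-1}{q-1}+1\right)\right\rfloor}\le\mathbb{E}_q(n).$$ Moreover, there is an equidistant linear code in $\mathbb{P}_q(n)$ with constant distance $2$ and of size $\mathbb{E}_q(n,1)$ whose nontrivial part is contained in a sunflower $\{V\in\mathbb{G}_q(n,2): W\subset V\}$ for some $W\in\mathbb{G}_q(n,1)$.
   Context: $\mathbb{P}_q(n)$ denotes the set of all subspaces of $\mathbb{F}_q^n$ and $\mathbb{G}_q(n,k)$ the set of $k$-dimensional subspaces. For subspaces $X,Y$ the subspace distance is $d_S(X,Y)=\dim X+\dim Y-2\dim(X\cap Y)$. A linear code in $\mathbb{P}_q(n)$ is a subset $\mathcal{U}\subseteq\mathbb{P}_q(n)$ with $\{0\}\in\mathcal{U}$ for which there exists a map $\boxplus:\mathcal{U}\times\mathcal{U}\to\mathcal{U}$ such that (i) $(\mathcal{U},\boxplus)$ is an abelian group; (ii) its identity element is $\{0\}$; (iii) $X\boxplus X=\{0\}$ for all $X\in\mathcal{U}$; (iv) $d_S(Y_1\boxplus X,Y_2\boxplus X)=d_S(Y_1,Y_2)$ for all $Y_1,Y_2,X\in\mathcal{U}$. Its nontrivial part is $\mathcal{U}\setminus\{\{0\}\}$. It is equidistant with constant distance $r$ if $d_S(X,Y)=r$ for all distinct $X,Y\in\mathcal{U}$. $\mathbb{E}_q(n)$ denotes the maximum size of an equidistant linear code in $\mathbb{P}_q(n)$, and $\mathbb{E}_q(n,d)$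 the maximum size of an equidistant linear code in $\mathbb{P}_q(n)$ with constant distance $2d$. A sunflower is a family of $k$-subspaces any two distinct members of which intersect in the same fixed subspace (its center). *)

(* Defs.v *)
From HB Require Import structures.
From mathcomp Require Import all_boot all_order all_algebra.
Set Implicit Arguments. Unset Strict Implicit. Unset Printing Implicit Defensive.
Import GRing.Theory VectorInternalTheory.

Section FinVspace.
Variables (F : finFieldType) (vT : vectType F).
HB.instance Definition _ : isCountable {vspace vT} := CanIsCountable (@vs2mxK F vT).
HB.instance Definition _ : isFinite {vspace vT} := CanIsFinite (@vs2mxK F vT).
End FinVspace.

Section Codes.
Variables (F : finFieldType) (n : nat).

Local Notation vs := {vspace 'rV[F]_n}.

Definition sdist (X Y : vs) : nat := (\dim X + \dim Y - 2 * \dim (X :&: Y))%N.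

(* the operation op (extended arbitrarily outside U x U) satisfies
   (i)-(iv) on U: closure, associativity, commutativity, identity {0},
   inverses, X op X = {0}, translation invariance of d_S *)
Definition linear_code_op (U : {set vs}) (op : {ffun vs * vs -> vs}) : bool :=
  [&& [forall X in U, forall Y in U, op (X, Y) \in U],
      [forall X in U, forall Y in U, forall Z in U,
         op (op (X, Y), Z) == op (X, op (Y, Z))],
      [forall X in U, forall Y in U, op (X, Y) == op (Y, X)],
      [forall X in U, (op (0%VS, X) == X) && (op (X, 0%VS) == X)],
      [forall X in U, exists Y in U, op (X, Y) == 0%VS],
      [forall X in U, op (X, X) == 0%VS] &
      [forall Y1 in U, forall Y2 in U, forall X in U,
         sdist (op (Y1, X)) (op (Y2, X)) == sdist Y1 Y2]].

Definition linear_code (U : {set vs}) : bool :=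
  (0%VS \in U) && [exists op, linear_code_op U op].

Definition equidistant_with (U : {set vs}) (r : nat) : bool :=
  [forall X in U, forall Y in U, (X != Y) ==> (sdist X Y == r)].

Definition equidistant (U : {set vs}) : bool :=
  [forall X in U, forall Y in U, forall X' in U, forall Y' in U,
     (X != Y) && (X' != Y') ==> (sdist X Y == sdist X' Y')].

Definition Eq_max : nat :=
  \max_(U : {set vs} | linear_code U && equidistant U) #|U|.

Definition Eq_max_d (d : nat) : nat :=
  \max_(U : {set vs} | linear_code U && equidistant_with U (2 * d)) #|U|.

End Codes.

(* Main.v *)
Require Import Defs.
From HB Require Import structures.
From mathcomp Require Import all_boot all_order all_algebra finfield zify.
Set Implicit Arguments. Unset Strict Implicit. Unset Printing Implicit Defensive.
Import GRing.Theory.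

Lemma pow2_group (T : finType) (U : {set T}) (op : T -> T -> T) (e : T) :
  e \in U ->
  (forall x y, x \in U -> y \in U -> op x y \in U) ->
  (forall x y z, x \in U -> y \in U -> z \in U -> op (op x y) z = op x (op y z)) ->
  (forall x y, x \in U -> y \in U -> op x y = op y x) ->
  (forall x, x \in U -> op e x = x) ->
  (forall x, x \in U -> op x x = e) ->
  exists k, #|U| = 2 ^ k.
Proof.
move=> eU cl As Co Id Nil.
suff main : forall m (H : {set T}), #|U| - #|H| < m -> H \subset U -> e \in H ->
   (forall x y, x \in H -> y \in H -> op x y \in H) ->
   (exists k, #|H| = 2 ^ k) -> exists k, #|U| = 2 ^ k.
  apply: (main (#|U|.+1) [set e]) => //.
  - by rewrite ltnS leq_subr.
  - by rewrite sub1set.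
  - by rewrite set11.
  - by move=> x y; rewrite !inE => /eqP-> /eqP->; rewrite Id.
  - by exists 0; rewrite cards1.
elim=> // m IH H lt HU eH clH [k Hk].
have [UH|] := boolP (U \subset H).
  have -> : U = H by apply/eqP; rewrite eqEsubset UH HU.
  by exists k.
case/subsetPn => a aU aH.
have HU' x : x \in H -> x \in U by move/(subsetP HU).
pose aH' := [set op a h | h in H].
have aaK h : h \in U -> op a (op a h) = h by move=> hU; rewrite -As // Nil // Id.
have disj : H :&: aH' = set0.
  apply/setP => x; rewrite !inE; apply/negP => /andP[xH /imsetP[h hH xE]].
  have hU := HU' _ hH.
  have ax : a = op x h by rewrite xE As // Nil // Co ?Id.
  by move/negP: aH; apply; rewrite ax clH.
have cardaH : #|aH'| = #|H|.
  apply: card_in_imset => h h' hH h'H E.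
  by rewrite -(aaK h) ?HU' // E aaK ?HU'.
pose H' := H :|: aH'.
have cH' : #|H'| = 2 * #|H| by rewrite cardsU disj cards0 cardaH; lia.
have H'U : H' \subset U.
  apply/subsetP => x; rewrite inE => /orP[/HU'//|/imsetP[h hH ->]].
  by rewrite cl // HU'.
apply: (IH H').
- have := subset_leq_card H'U; have := subset_leq_card HU.
  have : #|H| > 0 by rewrite (cardD1 e) eH.
  lia.
- exact: H'U.
- by rewrite inE eH.
- have opaH h h' : h \in H -> h' \in H -> op (op a h) h' = op a (op h h').
    by move=> hH h'H; rewrite As // HU'.
  move=> x y; rewrite !inE => /orP[xH|/imsetP[h hH ->]] /orP[yH|/imsetP[h' h'H ->]].
  + by rewrite clH.
  + have xU := HU' _ xH; have h'U := HU' _ h'H.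
    apply/orP; right; apply/imsetP; exists (op x h'); first by rewrite clH.
    by rewrite (Co _ _ xU (cl _ _ aU h'U)) opaH // (Co _ _ h'U xU).
  + have hU := HU' _ hH; have yU := HU' _ yH.
    apply/orP; right; apply/imsetP; exists (op h y); first by rewrite clH.
    by rewrite opaH.
  + have hU := HU' _ hH; have h'U := HU' _ h'H.
    apply/orP; left.
    rewrite (As _ _ _ aU hU (cl _ _ aU h'U)) -(As _ _ _ hU aU h'U) (Co _ _ hU aU).
    by rewrite (As _ _ _ aU hU h'U) aaK ?cl // clH.
- by exists k.+1; rewrite cH' Hk expnS.
Qed.

Section Count.
Variables (F : finFieldType) (n : nat).
Local Notation vs := {vspace 'rV[F]_n}.
Local Notation q := #|F|.

Definition vset (V : vs) : {set 'rV[F]_n} := [set v | v \in V].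

Lemma card_vset V : #|vset V| = q ^ \dim V.
Proof. by rewrite cardsE card_vspace. Qed.

Lemma card_vsetD (V Z : vs) : (Z <= V)%VS -> #|vset V :\: vset Z| = q ^ \dim V - q ^ \dim Z.
Proof.
move=> ZV; rewrite cardsDS ?card_vset //.
by apply/subsetP=> v; rewrite !inE => /(subvP ZV).
Qed.

Lemma sunflower_gen (fam : {set vs}) (Z X : vs) k :
  (forall V, V \in fam -> [/\ \dim V = k, (Z <= V)%VS & (V <= X)%VS]) ->
  (forall V V', V \in fam -> V' \in fam -> V != V' -> (V :&: V' <= Z)%VS) ->
  #|fam| * (q ^ k - q ^ \dim Z) = #|\bigcup_(V in fam) (vset V :\: vset Z)|
  /\ \bigcup_(V in fam) (vset V :\: vset Z) \subset vset X :\: vset Z.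
Proof.
move=> Hf Hd; split; last first.
  apply/bigcupsP => V /Hf [_ _ VX]; apply/subsetP => v; rewrite !inE.
  by case/andP=> -> /(subvP VX) ->.
pose G V := if V \in fam then vset V :\: vset Z else set0.
have -> : \bigcup_(V in fam) (vset V :\: vset Z) = \bigcup_V G V.
  by rewrite big_mkcond.
rewrite -[#|\bigcup_V G V|]sum1_card partition_disjoint_bigcup; last first.
  move=> V V' VV'; rewrite /G; rewrite -setI_eq0; case: ifP => Vf; last by rewrite set0I.
  case: ifP => V'f; last by rewrite setI0.
  apply/eqP/setP => v; rewrite !inE; apply/negP => /andP[/andP[vZ vV] /andP[_ vV']].
  by move: vZ; rewrite (subvP (Hd _ _ Vf V'f VV')) // memv_cap vV vV'.
rewrite -sum_nat_const big_mkcond /=; apply: eq_bigr => V _.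
rewrite /G; case: ifP => Vf; last by rewrite big_set0.
rewrite sum1_card card_vsetD; first by case: (Hf _ Vf) => ->.
by case: (Hf _ Vf).
Qed.

Lemma q_gt1 : 1 < q. Proof. exact: finNzRing_gt1. Qed.

Lemma dim_full : \dim (fullv : vs) = n.
Proof. by rewrite dimvf /dim /= mul1n. Qed.

Lemma eq_of_dim (V W : vs) : (V <= W)%VS -> \dim W <= \dim V -> V = W.
Proof. by move=> VW dW; apply/eqP; rewrite eqEdim VW. Qed.

Lemma line_not_sub (L Y : vs) : \dim L = 1 -> ~~ (L <= Y)%VS -> \dim (L :&: Y) = 0.
Proof.
move=> dL nLY; have := dimvS (capvSl L Y); rewrite dL => le1.
case: (ltnP (\dim (L :&: Y)) 1) => [|h1]; first by lia.
have /capv_idPl : (L :&: Y)%VS = L by apply: eq_of_dim; rewrite ?capvSl ?dL.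
by rewrite (negbTE nLY).
Qed.

Lemma sum_lines (V L1 L2 : vs) : \dim V = 2 -> (L1 <= V)%VS -> (L2 <= V)%VS ->
  \dim L1 = 1 -> \dim L2 = 1 -> \dim (L1 :&: L2) = 0 -> (L1 + L2)%VS = V.
Proof.
move=> dV s1 s2 d1 d2 d12; apply: eq_of_dim; first by rewrite subv_add s1 s2.
by have := dimv_sum_cap L1 L2; rewrite d1 d2 d12 dV; lia.
Qed.

Lemma dim2_cap (V V' : vs) : \dim V = 2 -> \dim V' = 2 -> V != V' -> \dim (V :&: V') <= 1.
Proof.
move=> dV dV' ne; case: (ltnP (\dim (V :&: V')) 2) => [|h2]; first by lia.
have e1 : (V :&: V')%VS = V by apply: eq_of_dim; rewrite ?capvSl ?dV.
have e2 : (V :&: V')%VS = V' by apply: eq_of_dim; rewrite ?capvSr ?dV'.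
by move: ne; rewrite -e1 -{2}e2 eqxx.
Qed.

Definition Lines (C : vs) := [set L : vs | (\dim L == 1) && (L <= C)%VS].

Lemma lines_card (C : vs) : \dim C = 2 -> #|Lines C| <= q.+1.
Proof.
move=> dC.
case: (@sunflower_gen (Lines C) 0%VS C 1) => [V|L L'|E S].
- by rewrite inE => /andP[/eqP -> ->]; rewrite sub0v.
- rewrite !inE => /andP[/eqP dL _] /andP[/eqP dL' _] ne.
  have [LL'|nLL'] := boolP (L <= L')%VS.
    by move: ne; rewrite (eq_of_dim LL') ?dL ?dL' ?eqxx.
  have := line_not_sub dL nLL'; move/eqP; rewrite dimv_eq0 => /eqP ->.
  exact: subvv.
have := subset_leq_card S; rewrite -E card_vsetD ?sub0v // dimv0 dC expn1 expn0.
have := q_gt1; set Q := q => Q1.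
rewrite (_ : Q ^ 2 - 1 = (Q - 1) * Q.+1); last by rewrite -mulnn; nia.
by rewrite [X in _ <= X]mulnC leq_pmul2r //; lia.
Qed.


Lemma code_facts (U : {set vs}) : equidistant_with U 2 -> 0%VS \in U ->
  (forall V, V \in U -> V != 0%VS -> \dim V = 2) /\
  (forall V V', V \in U -> V' \in U -> V != 0%VS -> V' != 0%VS -> V != V' ->
     \dim (V :&: V') = 1).
Proof.
move=> /forall_inP eq U0.
have ED X Y : X \in U -> Y \in U -> X != Y -> sdist X Y = 2.
  by move=> XU YU XY; move/forall_inP: (eq X XU) => /(_ Y YU) /implyP /(_ XY) /eqP.
have d2 V : V \in U -> V != 0%VS -> \dim V = 2.
  move=> VU V0; have := ED _ _ U0 VU; rewrite eq_sym => /(_ V0).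
  by rewrite /sdist cap0v dimv0; lia.
split=> // V V' VU V'U V0 V'0 VV'; have := ED _ _ VU V'U VV'.
by rewrite /sdist d2 // d2 //; lia.
Qed.

Definition Nsum := \sum_(i < n.-1) q ^ i.

Lemma Nsum_eq : (q ^ n.-1).-1 = q.-1 * Nsum.
Proof. exact: predn_exp. Qed.

Lemma Nsum_ge : 4 <= n -> q ^ 2 + q + 1 <= Nsum.
Proof.
move=> n4; have q1 := q_gt1.
have : q ^ 3 <= q ^ n.-1 by rewrite leq_pexp2l //; [lia | lia].
have e := Nsum_eq.
have : (q ^ 3).-1 = q.-1 * (q ^ 2 + q + 1).
  rewrite predn_exp !big_ord_recr big_ord0 /= expn0 expn1 add0n; congr (_ * _); lia.
move=> e3 le3.
have : q.-1 * (q ^ 2 + q + 1) <= q.-1 * Nsum by rewrite -e -e3; lia.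
by rewrite leq_pmul2l //; lia.
Qed.

Lemma nonzero_bound (U : {set vs}) : equidistant_with U 2 -> 0%VS \in U -> 4 <= n ->
  #|U :\ 0%VS| <= Nsum.
Proof.
move=> eqU U0 n4; have [d2 d1] := code_facts eqU U0.
have q1 := q_gt1; have Nge := Nsum_ge n4.
set U' := U :\ 0%VS.
have U'P V : V \in U' -> V != 0%VS /\ V \in U by rewrite in_setD1 => /andP.
case: (leqP #|U'| 1) => [le1|/card_gt1P [A [B [AU' BU' AB]]]]; first by lia.
have [A0 AU] := U'P _ AU'; have [B0 BU] := U'P _ BU'.
set P := (A :&: B)%VS.
have dP : \dim P = 1 by apply: d1.
have dA := d2 _ AU A0; have dB := d2 _ BU B0.
pose S := [set V : vs | (P <= V)%VS].
rewrite -(cardsID S U').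
set U1 := U' :&: S; set U2 := U' :\: S.
have U1P V : V \in U1 -> [/\ V != 0%VS, V \in U & (P <= V)%VS].
  by rewrite !inE => /andP[/andP[-> ->] ->].
have U2P V : V \in U2 -> [/\ V != 0%VS, V \in U & ~~ (P <= V)%VS].
  by rewrite !inE => /andP[/negP H /andP[-> ->]]; split=> //; apply/negP.
case: (set_0Vmem U2) => [U2e|[C CU2]].
- rewrite U2e cards0 addn0.
  case: (@sunflower_gen U1 P fullv 2) => [V /U1P[V0 VU PV]|V V' /U1P[V0 VU PV] /U1P[V'0 V'U PV'] ne|E Sb].
  + by rewrite d2 // subvf.
  + have dc := d1 _ _ VU V'U V0 V'0 ne.
    suff -> : (V :&: V')%VS = P by exact: subvv.
    by apply/esym/eq_of_dim; rewrite ?subv_cap ?PV ?PV' ?dP ?dc.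
  have := subset_leq_card Sb; rewrite -E card_vsetD ?subvf // dim_full dP expn1.
  have e := Nsum_eq.
  have -> : q ^ n - q = q * q.-1 * Nsum.
    have -> : q ^ n = q * q ^ n.-1 by rewrite -expnS prednK //; apply: leq_trans n4.
    by rewrite -mulnA -e; set X := q ^ n.-1; rewrite -[X.-1]subn1 mulnBr muln1.
  rewrite (_ : q ^ 2 - q = q * q.-1); last by rewrite -subn1 mulnBr muln1 mulnn.
  by rewrite [X in _ <= X]mulnC leq_pmul2r // muln_gt0 (ltnW q1) -subn1 subn_gt0 q1.
have [C0 CU nPC] := U2P _ CU2.
have dC := d2 _ CU C0.
have dPC : \dim (P :&: C) = 0 by apply: line_not_sub.
have le1 : #|U1| <= q.+1.
  have key V : V \in U1 -> (P + (V :&: C))%VS = V.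
    case/U1P=> V0 VU PV.
    have VC : V != C by apply: contraNneq nPC => <-.
    have dVC := d1 _ _ VU CU V0 C0 VC.
    apply: sum_lines; [exact: d2 | exact: PV | exact: capvSl | exact: dP | exact: dVC |].
    apply/eqP; rewrite -leqn0; have := dimvS (capvS (subvv P) (capvSr V C)).
    by rewrite dPC.
  rewrite -(card_in_imset (f := fun V => (V :&: C)%VS)); last first.
    by move=> V V' VU1 V'U1 /= E; rewrite -(key _ VU1) -(key _ V'U1) E.
  apply: leq_trans (lines_card dC); apply: subset_leq_card.
  apply/subsetP => L /imsetP[V VU1 ->]; rewrite inE capvSr andbT.
  case/U1P: VU1 => V0 VU PV.
  have VC : V != C by apply: contraNneq nPC => <-.
  by rewrite (d1 _ _ VU CU V0 C0 VC).
have le2 : #|U2| <= q * q.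
  have PA : (P <= A)%VS by exact: capvSl.
  have PB : (P <= B)%VS by exact: capvSr.
  have facts V : V \in U2 -> [/\ \dim (V :&: A) = 1, \dim (V :&: B) = 1,
       (V :&: A)%VS != P, (V :&: B)%VS != P & ((V :&: A) + (V :&: B))%VS = V].
    case/U2P=> V0 VU nPV.
    have VA : V != A by apply: contraNneq nPV => ->.
    have VB : V != B by apply: contraNneq nPV => ->.
    have dVA := d1 _ _ VU AU V0 A0 VA; have dVB := d1 _ _ VU BU V0 B0 VB.
    have nA : (V :&: A)%VS != P.
      by apply: contraNneq nPV => <-; exact: capvSl.
    have nB : (V :&: B)%VS != P.
      by apply: contraNneq nPV => <-; exact: capvSl.
    split=> //; apply: sum_lines; [exact: d2 | exact: capvSl | exact: capvSl | exact: dVA | exact: dVB |].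
    have dPV := line_not_sub dP nPV.
    apply/eqP; rewrite -leqn0.
    suff /dimvS : ((V :&: A) :&: (V :&: B) <= P :&: V)%VS by rewrite dPV.
    apply/subvP => v; rewrite !memv_cap => /andP[/andP[vV vA] /andP[_ vB]].
    by rewrite vV vA vB.
  rewrite -(card_in_imset (f := fun V => ((V :&: A)%VS, (V :&: B)%VS))); last first.
    move=> V V' VU2 V'U2 E; have /= EA := congr1 fst E; have /= EB := congr1 snd E.
    have [_ _ _ _ <-] := facts _ VU2; have [_ _ _ _ <-] := facts _ V'U2.
    by rewrite EA EB.
  have LA : #|Lines A :\ P| <= q.
    by have := lines_card dA; rewrite (cardsD1 P) inE dP PA eqxx /= add1n ltnS.
  have LB : #|Lines B :\ P| <= q.
    by have := lines_card dB; rewrite (cardsD1 P) inE dP PB eqxx /= add1n ltnS.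
  apply: leq_trans (leq_mul LA LB); rewrite -cardsX; apply: subset_leq_card.
  apply/subsetP => x /imsetP[V VU2 ->]; have [dVA dVB nA nB _] := facts _ VU2.
  by rewrite !inE /= nA nB dVA dVB !capvSr.
apply: leq_trans (leq_add le1 le2) _.
by move: Nge; rewrite (_ : q ^ 2 = q * q) //; clear; lia.
Qed.

Lemma equi_pow2_linear (S : {set vs}) r K :
  0%VS \in S -> equidistant_with S r -> #|S| = 2 ^ K -> linear_code S.
Proof.
move=> S0 eqS cS.
pose B := {ffun 'I_K -> bool}.
have cB : #|{: B}| = 2 ^ K by rewrite card_ffun card_bool card_ord.
pose s := enum S.
have ss : size s = 2 ^ K by rewrite -cS cardE.
have rk (b : B) : enum_rank b < size s by rewrite ss -cB ltn_ord.
pose psi (b : B) : vs := nth 0%VS s (enum_rank b).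
have psiS b : psi b \in S by rewrite -mem_enum mem_nth.
have psi_inj : injective psi.
  move=> b c /eqP; rewrite /psi nth_uniq ?enum_uniq // => /eqP E.
  by apply: enum_rank_inj; apply: val_inj.
have psi_surj X : X \in S -> exists b, psi b = X.
  move=> XS.
  have : [set psi b | b in B] = S.
    apply/eqP; rewrite eqEcard card_imset // cB -cS leqnn andbT.
    by apply/subsetP => Y /imsetP[b _ ->].
  by move/setP/(_ X); rewrite XS => /imsetP[b _ ->]; exists b.
pose b0 : B := [ffun => false].
pose phi (X : vs) : B := odflt b0 [pick b | psi b == X].
have phiK X : X \in S -> psi (phi X) = X.
  move=> XS; rewrite /phi; case: pickP => [b /eqP //|none].
  by have [b E] := psi_surj X XS; move: (none b); rewrite E eqxx.
have psiK b : phi (psi b) = b by apply: psi_inj; rewrite phiK.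
pose add (b c : B) : B := [ffun i => b i (+) c i].
pose opf X Y := psi (add (add (phi X) (phi Y)) (phi 0%VS)).
have opfS X Y : opf X Y \in S by apply: psiS.
have opf_inj X Y1 Y2 : Y1 \in S -> Y2 \in S -> opf Y1 X = opf Y2 X -> Y1 = Y2.
  move=> Y1S Y2S /psi_inj /ffunP E; rewrite -(phiK _ Y1S) -(phiK _ Y2S); apply: (congr1 psi).
  apply/ffunP => i; have := E i; rewrite !ffunE.
  by case: (phi Y1 i); case: (phi Y2 i); case: (phi X i); case: (phi 0%VS i).
apply/andP; split=> //; apply/existsP; exists [ffun p : vs * vs => opf p.1 p.2].
apply/andP; split.
  by apply/forall_inP => X _; apply/forall_inP => Y _; rewrite ffunE.
apply/andP; split.
  apply/forall_inP => X _; apply/forall_inP => Y _; apply/forall_inP => Z _.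
  rewrite !ffunE /= /opf !psiK; apply/eqP; apply: (congr1 psi); apply/ffunP => i; rewrite !ffunE.
  by case: (phi X i); case: (phi Y i); case: (phi Z i); case: (phi 0%VS i).
apply/andP; split.
  apply/forall_inP => X _; apply/forall_inP => Y _.
  rewrite !ffunE /= /opf; apply/eqP; apply: (congr1 psi); apply/ffunP => i; rewrite !ffunE.
  by case: (phi X i); case: (phi Y i); case: (phi 0%VS i).
apply/andP; split.
  apply/forall_inP => X XS; rewrite !ffunE /= /opf.
  apply/andP; split; apply/eqP; rewrite -[RHS](phiK X XS); apply: (congr1 psi);
    apply/ffunP => i; rewrite !ffunE.
    by case: (phi X i); case: (phi 0%VS i).
  by case: (phi X i); case: (phi 0%VS i).
apply/andP; split.
  apply/forall_inP => X XS; apply/existsP; exists X; rewrite XS /=.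
  rewrite ffunE /= /opf; apply/eqP; rewrite -[RHS](phiK _ S0); apply: (congr1 psi).
  by apply/ffunP => i; rewrite !ffunE; case: (phi X i); case: (phi 0%VS i).
apply/andP; split.
  apply/forall_inP => X XS.
  rewrite ffunE /= /opf; apply/eqP; rewrite -[RHS](phiK _ S0); apply: (congr1 psi).
  by apply/ffunP => i; rewrite !ffunE; case: (phi X i); case: (phi 0%VS i).
apply/forall_inP => Y1 Y1S; apply/forall_inP => Y2 Y2S; apply/forall_inP => X XS.
rewrite !ffunE /=.
have [->|ne] := eqVneq Y1 Y2; first by rewrite /sdist !capvv !mul2n -!addnn !subnn.
have ne' : opf Y1 X != opf Y2 X by apply: contra_neq ne; apply: opf_inj.
move/forall_inP: (eqS) => eqS'.
have ED A C : A \in S -> C \in S -> A != C -> sdist A C = r.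
  by move=> AS CS AC; move/forall_inP: (eqS' A AS) => /(_ C CS) /implyP /(_ AC) /eqP.
by rewrite !ED.
Qed.

Lemma subset_card (T : finType) (A : {set T}) m : m <= #|A| -> exists B : {set T}, B \subset A /\ #|B| = m.
Proof.
elim: m => [|m IH] lt; first by exists set0; rewrite sub0set cards0.
have [B [BA cB]] := IH (ltnW lt).
have : ~~ (A \subset B).
  by apply/negP => /subset_leq_card; rewrite cB; lia.
case/subsetPn => x xA xB; exists (x |: B); split.
  by rewrite subUset sub1set xA BA.
by rewrite cardsU1 xB cB.
Qed.


Lemma code_bound (U : {set vs}) : linear_code U -> equidistant_with U 2 -> 4 <= n ->
  #|U| <= 2 ^ trunc_log 2 (Nsum + 1).
Proof.
move=> LC eqU n4; case/andP: (LC) => U0 /existsP [op H].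
case/andP: H => H1 /andP[H2 /andP[H3 /andP[H4 /andP[H5 /andP[H6 H7]]]]].
have [k Hk] : exists k, #|U| = 2 ^ k.
  apply: (@pow2_group _ U (fun X Y => op (X, Y)) 0%VS U0).
  - by move=> X Y XU YU; move/forall_inP: H1 => /(_ X XU) /forall_inP /(_ Y YU).
  - move=> X Y Z XU YU ZU; move/forall_inP: H2 => /(_ X XU) /forall_inP /(_ Y YU).
    by move/forall_inP => /(_ Z ZU) /eqP.
  - by move=> X Y XU YU; move/forall_inP: H3 => /(_ X XU) /forall_inP /(_ Y YU) /eqP.
  - by move=> X XU; move/forall_inP: H4 => /(_ X XU) /andP[/eqP].
  - by move=> X XU; move/forall_inP: H6 => /(_ X XU) /eqP.
have := nonzero_bound eqU U0 n4.
rewrite (cardsD1 0%VS U) U0 /= in Hk *; rewrite Hk => le.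
rewrite leq_pexp2l //; apply: trunc_log_max => //.
by rewrite -Hk addnC leq_add2r.
Qed.

Lemma sun_card (W : vs) : \dim W = 1 -> 4 <= n ->
  #|[set V : vs | (\dim V == 2) && (W <= V)%VS]| = Nsum.
Proof.
move=> dW n4; set Sun := [set V : vs | _].
have q1 := q_gt1.
case: (@sunflower_gen Sun W fullv 2) => [V|V V'|E Sb].
- by rewrite inE => /andP[/eqP -> ->]; rewrite subvf.
- rewrite !inE => /andP[/eqP dV WV] /andP[/eqP dV' WV'] ne.
  have le1 := dim2_cap dV dV' ne.
  suff -> : (V :&: V')%VS = W by exact: subvv.
  by apply/esym/eq_of_dim; rewrite ?subv_cap ?WV ?WV' ?dW.
have cover : \bigcup_(V in Sun) (vset V :\: vset W) = vset fullv :\: vset W.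
  apply/eqP; rewrite eqEsubset Sb /=; apply/subsetP => v; rewrite !inE => /andP[vW _].
  apply/bigcupP; exists (W + <[v]>)%VS; last by rewrite !inE vW /= (subvP (addvSr W <[v]>)) ?memv_line.
  rewrite inE addvSl andbT.
  have v0 : v != 0%R by apply: contraNneq vW => ->; exact: mem0v.
  have dv : \dim <[v]> = 1 by rewrite dim_vline v0.
  have nvW : ~~ (<[v]> <= W)%VS by rewrite -memvE.
  have := line_not_sub dv nvW; rewrite capvC => d0.
  by have := dimv_sum_cap W <[v]>; rewrite d0 dW dv addn0 => ->.
move: E; rewrite cover card_vsetD ?subvf // dim_full dW expn1.
have e := Nsum_eq.
have -> : q ^ n - q = q * q.-1 * Nsum.
  have -> : q ^ n = q * q ^ n.-1 by rewrite -expnS prednK //; apply: leq_trans n4.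
  by rewrite -mulnA -e; set X := q ^ n.-1; rewrite -[X.-1]subn1 mulnBr muln1.
rewrite (_ : q ^ 2 - q = q * q.-1); last by rewrite -subn1 mulnBr muln1 mulnn.
move/eqP; rewrite [X in _ == X]mulnC eqn_pmul2r; first by move/eqP.
by rewrite muln_gt0 (ltnW q1) -subn1 subn_gt0 q1.
Qed.

Lemma construct : 4 <= n -> exists U : {set vs},
  [/\ linear_code U, equidistant_with U 2, #|U| = 2 ^ trunc_log 2 (Nsum + 1) &
      exists W : vs, \dim W = 1 /\
        forall V, V \in U -> V != 0%VS -> \dim V = 2 /\ (W <= V)%VS].
Proof.
move=> n4.
have n0 : 0 < n by apply: leq_trans n4.
pose w : 'rV[F]_n := const_mx 1%R.
have w0 : w != 0%R.
  apply/eqP => /matrixP /(_ ord0 (Ordinal n0)); rewrite !mxE => /eqP.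
  by rewrite oner_eq0.
pose W := <[w]>%VS.
have dW : \dim W = 1 by rewrite dim_vline w0.
set Sun := [set V : vs | (\dim V == 2) && (W <= V)%VS].
have cS := sun_card dW n4.
set K := trunc_log 2 (Nsum + 1).
have pK : 2 ^ K <= Nsum + 1 by apply: trunc_logP; rewrite ?addn1.
have hle : 2 ^ K - 1 <= #|Sun| by rewrite cS; move: pK; clear; lia.
have [T [TS cT]] := @subset_card _ Sun (2 ^ K - 1) hle.
have T0 : 0%VS \notin T.
  by apply/negP => /(subsetP TS); rewrite inE dimv0.
set U := 0%VS |: T.
have cU : #|U| = 2 ^ K.
  rewrite cardsU1 T0 cT /=; have : 0 < 2 ^ K by rewrite expn_gt0.
  by lia.
have TP V : V \in T -> \dim V = 2 /\ (W <= V)%VS.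
  by move/(subsetP TS); rewrite inE => /andP[/eqP -> ->].
have eqU : equidistant_with U 2.
  apply/forall_inP => X XU; apply/forall_inP => Y YU; apply/implyP => XY.
  move: XU YU; rewrite !in_setU1 => /orP[/eqP X0|XT] /orP[/eqP Y0|YT].
  - by move: XY; rewrite X0 Y0 eqxx.
  - by rewrite X0 /sdist cap0v dimv0 (proj1 (TP _ YT)).
  - by rewrite Y0 /sdist capv0 dimv0 (proj1 (TP _ XT)).
  - have [dX WX] := TP _ XT; have [dY WY] := TP _ YT.
    have le1 := dim2_cap dX dY XY.
    have WXY : (W <= X :&: Y)%VS by rewrite subv_cap WX WY.
    have := dimvS WXY; rewrite dW => ge1.
    have d1 : \dim (X :&: Y) = 1 by apply/eqP; rewrite eqn_leq le1 ge1.
    by rewrite /sdist dX dY d1.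
exists U; split=> //.
- by apply: (@equi_pow2_linear U 2 K) => //; rewrite setU11.
- exists W; split=> // V; rewrite in_setU1 => /orP[/eqP -> |VT]; first by rewrite eqxx.
  by move=> _; apply: TP.
Qed.

End Count.

Theorem proposition4 (F : finFieldType) (q n : nat) :
  #|F| = q -> (4 <= n)%N ->
  [/\ Eq_max_d F n 1 = 2 ^ trunc_log 2 ((q ^ (n - 1) - 1) %/ (q - 1) + 1),
      (Eq_max_d F n 1 <= Eq_max F n)%N &
      exists U : {set {vspace 'rV[F]_n}},
        [/\ linear_code U, equidistant_with U 2, #|U| = Eq_max_d F n 1 &
            exists W : {vspace 'rV[F]_n}, \dim W = 1%N /\
              forall V, V \in U -> V != 0%VS -> \dim V = 2%N /\ (W <= V)%VS]].
Proof.
move=> <- n4.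
have q1 := q_gt1 F.
have eN : (#|F| ^ (n - 1) - 1) %/ (#|F| - 1) = Nsum F n.
  by rewrite !subn1 Nsum_eq mulKn // -subn1 subn_gt0.
rewrite eN.
have [U [LU eqU cU WP]] := construct F n4.
have EM : Eq_max_d F n 1 = 2 ^ trunc_log 2 (Nsum F n + 1).
  apply/eqP; rewrite eqn_leq; apply/andP; split.
    by apply/bigmax_leqP => V /andP[LV eqV]; apply: code_bound.
  by rewrite -cU; apply: (@leq_bigmax_cond _ (fun V => linear_code V && equidistant_with V (2 * 1))); rewrite LU eqU.
split=> //.
- apply/bigmax_leqP => V /andP[LV eqV]; apply: leq_bigmax_cond; rewrite LV /=.
  apply/forall_inP => X XV; apply/forall_inP => Y YV; apply/forall_inP => X' X'V.
  apply/forall_inP => Y' Y'V; apply/implyP => /andP[XY X'Y'].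
  move/forall_inP: (eqV) => eqV'.
  have ED A C : A \in V -> C \in V -> A != C -> sdist A C = 2.
    by move=> AV CV AC; move/forall_inP: (eqV' A AV) => /(_ C CV) /implyP /(_ AC) /eqP.
  by rewrite !ED.
- by exists U; split=> //; rewrite EM.
Qed.
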